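(* Let $(\Delta,U,\mu_\Delta)$ be an expanding Young tower with $\mu_\Delta(\Delta_n)=O(\rho^n)$ for some $\rho<1$, and let $\tau<1$. There exist $C>0$ and $\theta<1$ such that for all $n\in\mathbb N$, $$\int_{U^{-n}\Delta_0}\tau^{\Psi_n}\,d\mu_\Delta\le C\theta^n.$$
   Context: Expanding Young tower: probability space $(\Delta,\mu_\Delta)$, measure-preserving $U$, partition $\{\Delta_{k,p}\}_{0\le k<r_p}$ with $U:\Delta_{k,p}\to\Delta_{k+1,p}$ and $U:\Delta_{r_p-1,p}\to\Delta_0=\bigcup_m\Delta_{0,m}$ measurable isomorphisms, and bounded distortion $|1-J(x)/J(y)|\le C\beta^{s(Ux,Uy)}$ for the inverse Jacobian $J$ of $U$ and $x,y$ in a common partition element ($s$ the separation time counted in returns to the basis). $\Delta_n=\bigcup_p\Delta_{n,p}$. $\Psi_n(x)=\#\{1\le k\le n: U^kx\in\Delta_0\}$ is the number of returns to the basis between times $1$ and $n$. *)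

(* Defs.v *)
From HB Require Import structures.
From mathcomp Require Import all_boot all_order all_algebra.
From mathcomp Require Import all_classical all_reals all_analysis.
Set Implicit Arguments. Unset Strict Implicit. Unset Printing Implicit Defensive.
Import Order.TTheory GRing.Theory Num.Theory.
Local Open Scope classical_set_scope.
Local Open Scope ring_scope.

Section YoungTower.
Context {d : measure_display} {T : measurableType d} {R : realType}.
Variables (P : probability T R) (U : T -> T) (r : nat -> nat)
  (part : nat -> nat -> set T) (J : T -> R).

Definition level (n : nat) : set T :=
  \bigcup_(p in [set p | (n < r p)%N]) part n p.

Definition base : set T := level 0.

Definition Psi (n : nat) (x : T) : nat :=
  (\sum_(1 <= k < n.+1) ((iter k U x) \in base))%N.

Definition same_elt (x y : T) : Prop :=
  exists k p, (k < r p)%N /\ part k p x /\ part k p y.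

(* "s(x,y) >= m": the separation time, counted in returns to the basis,
   is at least m.  If N is the first time at which U^N x and U^N y lie in
   different partition elements, s(x,y) = Psi N x; if there is no such N,
   s(x,y) = +oo. *)
Definition sep_ge (x y : T) (m : nat) : Prop :=
  forall N : nat,
    (forall j, (j < N)%N -> same_elt (iter j U x) (iter j U y)) ->
    ~ same_elt (iter N U x) (iter N U y) ->
    (m <= Psi N x)%N.

Definition meas_iso (A B : set T) : Prop :=
  {in A &, injective U} /\ U @` A = B /\
  (forall S, measurable S -> S `<=` A -> measurable (U @` S)).

Record is_young_tower : Prop := {
  yt_meas : measurable_fun setT U;
  yt_pres : forall A, measurable A -> P (U @^-1` A) = P A;
  yt_r_pos : forall p, (0 < r p)%N;
  yt_part_meas : forall k p, measurable (part k p);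
  yt_cover : forall x, exists k p, (k < r p)%N /\ part k p x;
  yt_disj : forall k p k' p' x, (k < r p)%N -> (k' < r p')%N ->
      part k p x -> part k' p' x -> k = k' /\ p = p';
  yt_up : forall k p, (k.+1 < r p)%N -> meas_iso (part k p) (part k.+1 p);
  yt_top : forall p, meas_iso (part (r p).-1 p) base;
  (* J is the inverse Jacobian of U: mu(U S) = \int_S 1/J dmu
     for measurable S inside a partition element *)
  yt_J_pos : forall x, 0 < J x;
  yt_J_meas : measurable_fun setT J;
  yt_jac : forall k p S, (k < r p)%N -> measurable S -> S `<=` part k p ->
      P (U @` S) = (\int[P]_(x in S) ((J x)^-1)%:E)%E;
  yt_dist : exists (C beta : R), 0 <= C /\ 0 < beta < 1 /\
      forall x y, same_elt x y -> forall m, sep_ge (U x) (U y) m ->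
        `|1 - J x / J y| <= C * beta ^+ m
}.

End YoungTower.

(* Main.v *)
Require Import Defs.
From HB Require Import structures.
From mathcomp Require Import all_boot all_order all_algebra.
From mathcomp Require Import all_classical all_reals all_analysis.
From mathcomp Require Import measurable_realfun.
From mathcomp Require Import zify ring lra.
From Stdlib Require Import Lia.
Import Order.TTheory GRing.Theory Num.Theory.
Local Open Scope classical_set_scope.
Local Open Scope ring_scope.
Set Implicit Arguments. Unset Strict Implicit. Unset Printing Implicit Defensive.

Section S.
Context (d : measure_display) (T : measurableType d) (R : realType)
  (P : probability T R) (U : T -> T) (r : nat -> nat)
  (part : nat -> nat -> set T) (J : T -> R).
Hypothesis H : is_young_tower P U r part J.
Local Notation B := (base r part).
Local Notation Ps := (Psi U r part).

Lemma mpart k p : measurable (part k p).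
Proof. exact: (yt_part_meas H). Qed.

Lemma mlevel n : measurable (level r part n).
Proof. by apply: bigcup_measurable => p _; exact: mpart. Qed.

Lemma mbase : measurable B.
Proof. exact: mlevel. Qed.

Lemma miter n : measurable_fun setT (iter n U).
Proof.
elim: n => [|n IH] /=; first exact: measurable_id.
exact: (measurableT_comp (yt_meas H) IH).
Qed.

Lemma mpre n A : measurable A -> measurable (iter n U @^-1` A).
Proof. by move=> mA; rewrite -[X in measurable X]setTI; exact: miter. Qed.

Lemma mpre1 A : measurable A -> measurable (U @^-1` A).
Proof. exact: (mpre 1). Qed.

Lemma pres n A : measurable A -> P (iter n U @^-1` A) = P A.
Proof.
elim: n A => [|n IH] A mA //=.
rewrite (_ : _ @^-1` A = iter n U @^-1` (U @^-1` A)) //.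
by rewrite IH ?(yt_pres H) //; exact: mpre1.
Qed.

Lemma baseP x : B x <-> exists p, (0 < r p)%N /\ part 0 p x.
Proof.
split; first by case=> p /= rp px; exists p.
by case=> p [rp px]; exists p.
Qed.

Lemma not_base k p y : (0 < k)%N -> (k < r p)%N -> part k p y -> ~ B y.
Proof.
move=> k0 kr py /baseP [q [rq qy]].
by have [k0' _] := yt_disj H kr rq py qy; rewrite k0' in k0.
Qed.

Lemma step k p x : (k.+1 < r p)%N -> part k p x -> part k.+1 p (U x).
Proof.
move=> kr px; have [_ [<- _]] := yt_up H kr; by exists x.
Qed.

Lemma top p x : part (r p).-1 p x -> B (U x).
Proof.
move=> px; have [_ [<- _]] := yt_top H p; by exists x.
Qed.

Lemma orbit l p x : (l < r p)%N -> part l p x ->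
  forall j, (l + j < r p)%N -> part (l + j) p (iter j U x).
Proof.
move=> lr px; elim=> [|j IH] hj /=; first by rewrite addn0.
rewrite addnS; apply: step; first lia.
apply: IH; lia.
Qed.

Lemma orbit_ret l p x : (l < r p)%N -> part l p x ->
  B (iter (r p - l) U x).
Proof.
move=> lr px.
have -> : (r p - l = (r p - l).-1.+1)%N by lia.
rewrite iterS; apply: (@top p).
have -> : ((r p).-1 = l + (r p - l).-1)%N by lia.
apply: orbit => //; lia.
Qed.

Lemma Psi0 x : Ps 0 x = 0%N.
Proof. by rewrite /Psi big_geq. Qed.

Lemma PsiS n x : Ps n.+1 x = ((U x \in B) + Ps n (U x))%N.
Proof.
rewrite /Psi big_nat_recl //=; congr (_ + _)%N.
by apply: eq_bigr => k _; rewrite -iterS iterSr.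
Qed.

Lemma Psi_le n x : (Ps n x <= n)%N.
Proof.
elim: n x => [|n IH] x; first by rewrite Psi0.
rewrite PsiS; have := IH (U x); case: (U x \in B) => /=; lia.
Qed.

Lemma Psi_split t n x : (0 < t)%N -> (t <= n)%N ->
  (forall j, (0 < j < t)%N -> ~ B (iter j U x)) -> B (iter t U x) ->
  Ps n x = (Ps (n - t) (iter t U x)).+1.
Proof.
elim: t n x => [//|t IH] [//|n] x _ tn hj ht.
rewrite PsiS.
case: t IH tn hj ht => [|t] IH tn hj ht.
  by move: ht => /= ht; rewrite (mem_set ht) subn1.
rewrite (_ : (U x \in B) = false); last first.
  apply/negbTE/negP; rewrite in_setE; by apply: (hj 1%N).
rewrite add0n (IH n (U x)) //.
- by rewrite subSS -iterSr.
- move=> j hj'; rewrite -iterSr; apply: hj; lia.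
- by rewrite -iterSr.
Qed.


Lemma pre_floor k p : (k.+1 < r p)%N -> U @^-1` part k.+1 p = part k p.
Proof.
move=> kr; apply/seteqP; split => z /=; last exact: step.
move=> hz; have [j [q [jq qz]]] := yt_cover H z.
case: (ltnP j.+1 (r q)) => jq'.
  have hz' := step jq' qz.
  have [e1 e2] := yt_disj H jq' kr hz' hz.
  by case: e1 => e1; rewrite -e1 -e2.
have jeq : j = (r q).-1 by lia.
rewrite jeq in qz; have /baseP [q' [rq' hq']] := top qz.
by have [e _] := yt_disj H rq' kr hq' hz.
Qed.

Lemma floor_meas k p : (k < r p)%N -> P (part k p) = P (part 0 p).
Proof.
elim: k => // k IH kr.
rewrite -(yt_pres H (mpart _ _)) (pre_floor kr) IH //; lia.
Qed.

Lemma mPsi n k : measurable [set x | Ps n x = k].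
Proof.
elim: n k => [|n IH] k.
  case: k => [|k].
    rewrite (_ : [set x | _] = setT); first exact: measurableT.
    by apply/seteqP; split => x //= _; exact: Psi0.
  rewrite (_ : [set x | _] = set0); first exact: measurable0.
  by apply/seteqP; split => x //=; rewrite Psi0.
pose S := if k is k'.+1 then (B `&` [set y | Ps n y = k']) `|` (~` B `&` [set y | Ps n y = k])
          else ~` B `&` [set y | Ps n y = 0%N].
have mS : measurable S.
  case: k @S => [|k] /=.
    by apply: measurableI; [apply: measurableC; exact: mbase|exact: IH].
  by apply: measurableU; apply: measurableI;
    try (apply: measurableC); try exact: mbase; exact: IH.
rewrite (_ : [set x | _] = U @^-1` S); first exact: mpre1.
clear mS.
apply/seteqP; split => x /=; rewrite PsiS;
  (case: (pselect (B (U x))) => hb;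
   [rewrite (mem_set hb) | rewrite (memNset hb)]);
  case: k @S => [|k] /=.
all: first [ lia | (move=> h; split => //; lia) | (move=> h; left; split => //; lia) | (move=> h; right; split => //; lia)
  | (case=> [[h1 h2]|[h1 h2]]; (contradiction || lia)) | (case=> h1 h2; (contradiction||lia)) ].
Qed.

Definition F n k := iter n U @^-1` B `&` [set x | Ps n x = k].
Definition Top t := \bigcup_(p in [set p | (t < r p)%N]) part (r p).-1 p.
Definition X n k t := iter t U @^-1` (Top t `&` U @^-1` (B `&` F (n - t.+1) k)).

Lemma mF n k : measurable (F n k).
Proof. by apply: measurableI; [apply: mpre; exact: mbase | exact: mPsi]. Qed.

Lemma decomp n k : F n k.+1 `<=` \big[setU/set0]_(t < n) X n k t.
Proof.
move=> x [hB hPs0].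
have hPs : Ps n x = k.+1 := hPs0.
have {hB}hB : B (iter n U x) := hB.
clear hPs0.
have n0 : (0 < n)%N by case: n hB hPs => // _; rewrite /= Psi0.
have [l [p [lp px]]] := yt_cover H x.
have hnb j : (0 < j)%N -> (l + j < r p)%N -> ~ B (iter j U x).
  move=> j0 hj; apply: (@not_base (l + j) p) => //; first lia.
  exact: orbit.
case: (ltnP n (r p - l)) => nt.
  by exfalso; apply: (hnb n) => //; lia.
rewrite -bigcup_mkord; exists (r p - l).-1; first by rewrite /=; lia.
have ret := orbit_ret lp px.
have eqt : (r p - l = ((r p - l).-1).+1)%N by lia.
have sp := Psi_split (n:=n) (t := r p - l) (x:=x).
rewrite sp in hPs; first last.
- by [].
- by move=> j hj; apply: hnb; lia.
- by [].
- lia.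
case: hPs => hPs; rewrite /=; split.
  exists p; first by rewrite /=; lia.
  have -> : ((r p).-1 = l + (r p - l).-1)%N by lia.
  apply: orbit => //; lia.
rewrite /preimage /= -iterS -eqt; split => //; split => //.
rewrite /preimage /= -iterD subnK //.
Qed.

Lemma Pfin A : measurable A -> P A = (fine (P A))%:E.
Proof. by move=> mA; rewrite fineK // fin_num_measure. Qed.

Lemma mJinv D : measurable_fun D (fun x => ((J x)^-1)%:E).
Proof.
apply/measurable_EFinP.
rewrite (_ : (fun x => _) = (fun x => (J x) `^ (-1))); last first.
  by apply/funext => x; rewrite powR_inv1 // ltW // (yt_J_pos H).
apply: measurable_funTS.
exact: (measurableT_comp (measurable_powR _) (yt_J_meas H)).
Qed.

Lemma distortion : exists D : R, 0 <= D /\ forall p V, measurable V -> V `<=` B ->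
  (P (part (r p).-1 p `&` U @^-1` V) * P B
     <= D%:E * P (part (r p).-1 p) * P V)%E.
Proof.
have [C [beta [C0 [b01 hd]]]] := yt_dist H.
exists ((1 + C) ^+ 2); split; first by rewrite exprn_ge0 // addr_ge0.
move=> p V mV VB.
set E := part (r p).-1 p.
have rp : ((r p).-1 < r p)%N by have := yt_r_pos H p; lia.
have mE : measurable E := mpart _ _.
set W := E `&` U @^-1` V.
have mW : measurable W by apply: measurableI => //; exact: mpre1.
have UE : U @` E = B := (yt_top H p).2.1.
have UW : U @` W = V.
  apply/seteqP; split; first by move=> _ [x [_ hx] <-].
  move=> v Vv; have := VB _ Vv; rewrite -UE; case=> x Ex Uxv.
  by exists x => //; split => //; rewrite /preimage /= Uxv.
case: (pselect (exists y, E y)) => [[y Ey]|nE]; last first.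
  have -> : W = set0.
    by apply/seteqP; split => x // [Ex _]; apply: nE; exists x.
  rewrite measure0 mul0e; apply: mule_ge0; last exact: measure_ge0.
  by apply: mule_ge0; [rewrite lee_fin exprn_ge0 // addr_ge0|exact: measure_ge0].
have Jp x : 0 < J x := yt_J_pos H x.
have Jb u v : E u -> E v -> J u <= (1 + C) * J v.
  move=> Eu Ev.
  have h := hd u v (ex_intro _ (r p).-1 (ex_intro _ p (conj rp (conj Eu Ev)))) 0%N
    (fun N _ _ => leq0n _).
  rewrite expr0 mulr1 ler_norml in h; case/andP: h => h _.
  have q : J u / J v <= 1 + C by lra.
  have e : J u = (J u / J v) * J v by rewrite divfK // gt_eqF.
  rewrite e; apply: ler_pM => //; [by rewrite divr_ge0 // ltW | exact: ltW].
set a := J y.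
have a0 : 0 < a := Jp y.
have low : ((((1 + C) * a)^-1)%:E * P W <= P V)%E.
  rewrite -UW (yt_jac H rp mW (fun x h => h.1)).
  rewrite -integral_cst //.
  apply: ge0_le_integral => //; try exact: mJinv.
    by move=> x _; rewrite lee_fin invr_ge0 mulr_ge0 // ?addr_ge0 // ltW.
  move=> x [Ex _]; rewrite lee_fin /= lef_pV2 ?posrE ?Jp ?mulr_gt0 //; last by rewrite ltr_pwDl.
  exact: Jb.
have up : (P B <= (((1 + C) / a))%:E * P E)%E.
  rewrite -UE (yt_jac H rp mE (fun x h => h)).
  rewrite -integral_cst //.
  apply: ge0_le_integral => //; try exact: mJinv.
    by move=> x _; rewrite lee_fin invr_ge0 ltW.
  move=> x Ex; rewrite lee_fin /=.
  have := Jb y x Ey Ex; rewrite -/a => h.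
  by rewrite ler_pdivlMr // mulrC ler_pdivrMr.
move: low up; rewrite (Pfin mW) (Pfin mV) (Pfin mE) (Pfin mbase) -!EFinM !lee_fin => low up.
set w := fine (P W) in low *; set b := fine (P B) in up *.
set e := fine (P E) in up *; set v := fine (P V) in low *.
have w0 : 0 <= w by apply: fine_ge0; exact: measure_ge0.
have b0 : 0 <= b by apply: fine_ge0; exact: measure_ge0.
have e0 : 0 <= e by apply: fine_ge0; exact: measure_ge0.
have v0 : 0 <= v by apply: fine_ge0; exact: measure_ge0.
have k0 : 0 < (1 + C) * a by rewrite mulr_gt0 // ltr_pwDl.
have wle : w <= (1 + C) * a * v.
  have -> : w = ((1 + C) * a) * (((1 + C) * a)^-1 * w).
    by rewrite mulrA mulfV ?gt_eqF // mul1r.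
  by rewrite ler_wpM2l // ltW.
have bale : b * a <= (1 + C) * e.
  have -> : (1 + C) * e = ((1 + C) / a * e) * a.
    by field; rewrite gt_eqF.
  by rewrite ler_wpM2r // ltW.
have h1 : w * b <= ((1 + C) * a * v) * b by rewrite ler_wpM2r.
have h2 : ((1 + C) * a * v) * b = ((1 + C) * v) * (b * a) by ring.
have h3 : ((1 + C) * v) * (b * a) <= ((1 + C) * v) * ((1 + C) * e).
  by rewrite ler_wpM2l // mulr_ge0 // addr_ge0.
have h4 : ((1 + C) * v) * ((1 + C) * e) = (1 + C) ^+ 2 * e * v by ring.
by rewrite -h4; apply: (le_trans h1); rewrite h2.
Qed.


Lemma triv_level t : trivIset [set p | (t < r p)%N] (fun p => part t p).
Proof.
move=> i j hi hj [x [xi xj]].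
by have [_ ->] := yt_disj H hi hj xi xj.
Qed.

Lemma triv_top t Y : trivIset [set p | (t < r p)%N] (fun p => part (r p).-1 p `&` Y).
Proof.
move=> i j hi hj [x [[xi _] [xj _]]].
have ri : ((r i).-1 < r i)%N by have := yt_r_pos H i; lia.
have rj : ((r j).-1 < r j)%N by have := yt_r_pos H j; lia.
by have [_ ->] := yt_disj H ri rj xi xj.
Qed.

Lemma top_bound D : (forall p V, measurable V -> V `<=` B ->
  (P (part (r p).-1 p `&` U @^-1` V) * P B
     <= D%:E * P (part (r p).-1 p) * P V)%E) -> 0 <= D ->
  forall t V, measurable V -> V `<=` B ->
  (P (Top t `&` U @^-1` V) * P B <= D%:E * P (level r part t) * P V)%E.
Proof.
move=> hD D0 t V mV VB.
have mY : measurable (U @^-1` V) := mpre1 mV.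
rewrite /Top setI_bigcupl measure_bigcup; last first.
- exact: triv_top.
- by move=> p _; apply: measurableI => //; exact: mpart.
rewrite muleC (Pfin mbase) -nneseriesZl; last by move=> p _; exact: measure_ge0.
set pb := fine (P B).
rewrite /level measure_bigcup; last first.
- exact: triv_level.
- by move=> p _; exact: mpart.
rewrite (Pfin mV).
rewrite -muleA [X in (_ * X)%E]muleC muleA -EFinM -nneseriesZl; last first.
  by move=> p _; exact: measure_ge0.
apply: lee_nneseries; first by move=> i _ _; apply: mule_ge0; [rewrite lee_fin; apply: fine_ge0; exact: measure_ge0| exact: measure_ge0].
move=> p; rewrite inE /= => tp.
have rp : ((r p).-1 < r p)%N by lia.
have := hD p V mV VB.
rewrite (floor_meas rp) -(floor_meas tp).
have mW : measurable (part (r p).-1 p `&` U @^-1` V) by apply: measurableI => //; exact: mpart.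
rewrite (Pfin mW) (Pfin mbase) -/pb (Pfin mV) (Pfin (mpart t p)) -!EFinM !lee_fin => h.
rewrite mulrC; apply: (le_trans h); rewrite /=.
by rewrite -!mulrA [X in _ * X]mulrC.
Qed.

Lemma mTop t : measurable (Top t).
Proof. by apply: bigcup_measurable => p _; exact: mpart. Qed.

Lemma rec_ext D : (forall p V, measurable V -> V `<=` B ->
  (P (part (r p).-1 p `&` U @^-1` V) * P B
     <= D%:E * P (part (r p).-1 p) * P V)%E) -> 0 <= D ->
  forall n k, (P (F n k.+1) * P B <=
    \sum_(t < n) (D%:E * P (level r part t) * P (F (n - t.+1) k)))%E.
Proof.
move=> hD D0 n k.
have mV t : measurable (B `&` F (n - t.+1) k) by apply: measurableI; [exact: mbase|exact: mF].
have mX t : measurable (X n k t).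
  by apply: mpre; apply: measurableI; [exact: mTop|exact: mpre1].
have hs : (P (F n k.+1) <= \sum_(t < n) P (X n k t))%E.
  exact: (@content_subadditive _ _ _ P _ _ _ (fun t _ => mX t) (mF n k.+1) (@decomp n k)).
apply: le_trans; first exact: (lee_wpmul2r (measure_ge0 P B) hs).
rewrite ge0_sume_distrl; last by move=> t _; exact: measure_ge0.
apply: lee_sum => t _.
have mT : measurable (Top t `&` U @^-1` (B `&` F (n - t.+1) k)).
  by apply: measurableI; [exact: mTop|exact: mpre1].
rewrite /X (pres t mT).
apply: le_trans.
  apply: (top_bound hD D0); [exact: mV | by move=> x []].
apply: lee_wpmul2l.
  by apply: mule_ge0; [rewrite lee_fin|exact: measure_ge0].
apply: le_measure; rewrite ?inE; [exact: mV|exact: mF|by move=> x []].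
Qed.

Lemma Psi_last n x : B (iter n.+1 U x) -> (0 < Ps n.+1 x)%N.
Proof. by move=> h; rewrite /Psi big_nat_recr //= (mem_set h) addn1. Qed.

Lemma F0 n : F n.+1 0 = set0.
Proof.
apply/seteqP; split => x // [h1 h2].
by have := Psi_last h1; rewrite /= in h2; rewrite h2.
Qed.

Lemma integral_eq tau n : 0 <= tau ->
  (\int[P]_(x in iter n U @^-1` B) (tau ^+ Ps n x)%:E
   = \sum_(k < n.+1) (tau ^+ k)%:E * P (F n k))%E.
Proof.
move=> t0.
have mD : measurable (iter n U @^-1` B) by apply: mpre; exact: mbase.
pose S (k : 'I_n.+1) := [set y | Ps n y = k].
have e : {in iter n U @^-1` B, (fun x => (tau ^+ Ps n x)%:E) =1
   (fun x => \sum_(k < n.+1) ((tau ^+ k)%:E * (\1_(S k) x)%:E))%E}.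
  move=> x _ /=; rewrite sumEFin; congr (_%:E).
  have hk : (Ps n x < n.+1)%N by rewrite ltnS; exact: Psi_le.
  rewrite (bigD1 (Ordinal hk)) //= big1 ?addr0.
    by rewrite indicE (mem_set (erefl _ : S (Ordinal hk) x)) mulr1.
  move=> i hi; rewrite indicE memNset ?mulr0 //.
  by move=> h; move: hi; rewrite /S /= in h; apply/negP; rewrite negbK; apply/eqP/val_inj.
transitivity (\int[P]_(x in iter n U @^-1` B)
   (\sum_(k < n.+1) ((tau ^+ k)%:E * (\1_(S k) x)%:E)))%E.
  exact: eq_integral.
rewrite ge0_integral_sum //; last first.
- by move=> k x _; apply: mule_ge0; [rewrite lee_fin exprn_ge0 | rewrite lee_fin indicE ler0n].
- move=> k; apply/measurable_EFinP => /=.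
  apply: measurable_funM; first exact: measurable_cst.
  by apply: measurable_indic; exact: mPsi.
apply: eq_bigr => k _.
rewrite ge0_integralZl //.
all: first [ by rewrite integral_indic //; [rewrite setIC | exact: mPsi]
  | by rewrite lee_fin exprn_ge0 | by move=> x _; rewrite lee_fin indicE ler0n
  | by apply/measurable_EFinP; apply: measurable_indic; exact: mPsi ].
Qed.

End S.

Section Real.
Context {R : realType}.

Lemma geo (rho th : R) n : 0 <= rho -> rho < th ->
  \sum_(t < n) rho ^+ t * th ^+ (n - t.+1) <= th ^+ n / (th - rho).
Proof.
move=> r0 rt.
have hp : 0 < th - rho by rewrite subr_gt0.
have e := subrXX th rho n.
have -> : \sum_(t < n) rho ^+ t * th ^+ (n - t.+1) =
          \sum_(i < n) th ^+ (n.-1 - i) * rho ^+ i.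
  by apply: eq_bigr => i _; rewrite mulrC; congr (_ ^+ _ * _); lia.
rewrite ler_pdivlMr // mulrC -e lerBlDr lerDl exprn_ge0 //.
Qed.

Lemma geo2 (g : R) n : 0 <= g -> g < 1 -> \sum_(k < n) g ^+ k <= (1 - g)^-1.
Proof.
move=> g0 g1.
have hp : 0 < 1 - g by rewrite subr_gt0.
have e := subrXX 1 g n.
have -> : \sum_(k < n) g ^+ k = \sum_(i < n) 1 ^+ (n.-1 - i) * g ^+ i.
  by apply: eq_bigr => i _; rewrite expr1n mul1r.
rewrite -[X in _ <= X]mul1r ler_pdivlMr // mulrC -e expr1n lerBlDr lerDl exprn_ge0 //.
Qed.

Lemma root_ex (a : R) N : 0 <= a -> (0 < N)%N -> exists b, 0 <= b /\ b ^+ N = a.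
Proof.
move=> a0 N0; exists (a `^ (N%:R^-1)); split; first exact: powR_ge0.
rewrite -powR_mulrn ?powR_ge0 // -powRrM mulVf ?powRr1 //.
by rewrite pnatr_eq0; lia.
Qed.

Lemma small_pow (t e : R) : `|t| < 1 -> 0 < e -> exists m : nat, t ^+ m < e.
Proof.
move=> ht e0.
have := @cvgr0_norm_lt _ _ _ _ _ (fun m => t ^+ m) (cvg_expr ht) e e0.
case=> N _ hN.
exists N; have := hN N (leqnn N) => /= h.
by apply: le_lt_trans h; exact: ler_norm.
Qed.

Lemma term_bound (t f X : R) N k : 0 <= t -> t <= 1 -> 0 <= f -> f <= 1 -> f <= X ->
  (0 < N)%N -> (t ^+ k * f) ^+ N <= (t ^+ N.-1) ^+ k * X.
Proof.
move=> t0 t1 f0 f1 fX N0.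
have tk0 : 0 <= t ^+ k by exact: exprn_ge0.
have tk1 : t ^+ k <= 1 by exact: exprn_ile1.
rewrite exprMn.
have h1 : f ^+ N <= f.
  have -> : N = N.-1.+1 by lia.
  rewrite exprS; rewrite -[X in _ <= X]mulr1; apply: ler_wpM2l => //.
  exact: exprn_ile1.
have h2 : (t ^+ k) ^+ N <= (t ^+ N.-1) ^+ k.
  have -> : (t ^+ k) ^+ N = (t ^+ N.-1) ^+ k * t ^+ k.
    rewrite -!exprM -exprD; congr (_ ^+ _); nia.
  by rewrite -[X in _ <= X]mulr1 ler_wpM2l // exprn_ge0 // exprn_ge0.
apply: le_trans (_ : (t ^+ N.-1) ^+ k * f <= _); last first.
  by rewrite ler_wpM2l // exprn_ge0 // exprn_ge0.
apply: le_trans (_ : (t ^+ k) ^+ N * f <= _).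
  by rewrite ler_wpM2l // exprn_ge0.
by rewrite ler_wpM2r.
Qed.

End Real.

Unset Implicit Arguments.

Theorem lemmaA2 (d : measure_display) (T : measurableType d) (R : realType)
  (P : probability T R) (U : T -> T) (r : nat -> nat)
  (part : nat -> nat -> set T) (J : T -> R) (tau : R) :
  is_young_tower P U r part J ->
  (exists rho K : R, 0 <= rho < 1 /\
     forall n, (P (level r part n) <= (K * rho ^+ n)%:E)%E) ->
  0 <= tau < 1 ->
  exists C theta : R, 0 < C /\ 0 < theta < 1 /\
    forall n : nat,
      (\int[P]_(x in (iter n U) @^-1` base r part)
          (tau ^+ Psi U r part n x)%:E <= (C * theta ^+ n)%:E)%E.
Proof.
move=> HY [rho [K [/andP [rho0 rho1] hK]]] /andP [tau0 tau1].
have [D [D0 hD]] := distortion HY.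
have mB := mbase HY.
have PBe := Pfin P mB.
have pb0 : 0 <= fine (P (base r part)) by apply: fine_ge0; exact: measure_ge0.
have f0 n k : 0 <= fine (P (F U r part n k)) by apply: fine_ge0; exact: measure_ge0.
have f1 n k : fine (P (F U r part n k)) <= 1.
  rewrite -lee_fin -(Pfin P (mF HY n k)); exact: probability_le1 (mF HY n k).
have sumE n : (\sum_(k < n.+1) (tau ^+ k)%:E * P (F U r part n k) =
     (\sum_(k < n.+1) tau ^+ k * fine (P (F U r part n k)))%:E)%E.
  rewrite -sumEFin; apply: eq_bigr => k _.
  by rewrite EFinM -(Pfin P (mF HY n k)).
case: (eqVneq (fine (P (base r part))) 0) => [pbz|pbn].
  exists 1, (1/2); split; first exact: ltr01.
  split; first by apply/andP; split; lra.
  move=> n; rewrite (integral_eq HY) // sumE lee_fin.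
  rewrite big1; first by rewrite mulr_ge0 // exprn_ge0 //; lra.
  move=> k _.
  have -> : fine (P (F U r part n k)) = 0.
    apply/le_anti/andP; split => //.
    rewrite -lee_fin -(Pfin P (mF HY n k)).
    apply: le_trans (_ : P (iter n U @^-1` base r part) <= _)%E.
      apply: le_measure; rewrite ?inE; [exact: (mF HY) | apply: (mpre HY); exact: mB | by move=> x []].
    by rewrite (pres HY) // PBe pbz.
  by rewrite mulr0.
set pb := fine (P (base r part)) in pb0 pbn PBe *.
have pbp : 0 < pb by rewrite lt_def pbn.
have K0 : 0 <= K.
  have := hK 0%N; rewrite expr0 mulr1 => h.
  by have := le_trans (measure_ge0 P _) h; rewrite lee_fin.
have ha t : fine (P (level r part t)) <= K * rho ^+ t.
  by have := hK t; rewrite (Pfin P (mlevel HY t)) lee_fin.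
set c := D / pb.
have c0 : 0 <= c by rewrite /c divr_ge0 // ltW.
have rec n k : fine (P (F U r part n k.+1)) <=
    \sum_(t < n) c * (K * rho ^+ t) * fine (P (F U r part (n - t.+1) k)).
  have := rec_ext HY hD D0 n k.
  rewrite (Pfin P (mF HY n k.+1)) PBe -EFinM.
  have -> : (\sum_(t < n) (D%:E * P (level r part t) * P (F U r part (n - t.+1) k)) =
    (\sum_(t < n) D * fine (P (level r part t)) * fine (P (F U r part (n - t.+1) k)))%:E)%E.
    rewrite -sumEFin; apply: eq_bigr => t _.
    by rewrite !EFinM -(Pfin P (mF HY _ k)) -(Pfin P (mlevel HY t)).
  rewrite lee_fin -ler_pdivlMr // => h; apply: (le_trans h).
  rewrite mulr_suml; apply: ler_sum => t _.
  have -> : D * fine (P (level r part t)) * fine (P (F U r part (n - t.+1) k)) / pb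
     = c * fine (P (level r part t)) * fine (P (F U r part (n - t.+1) k)).
    by rewrite /c; field; rewrite gt_eqF.
  by apply: ler_wpM2r => //; apply: ler_wpM2l.
set th := (1 + rho) / 2.
have th0 : 0 < th by rewrite /th; lra.
have th1 : th < 1 by rewrite /th; lra.
have rth : rho < th by rewrite /th; lra.
set w := c * K / (th - rho) + 1.
have hw : c * K / (th - rho) <= w by rewrite /w lerDl.
have w0 : 0 < w.
  have : 0 <= c * K / (th - rho).
    by apply: divr_ge0; [exact: mulr_ge0 | lra].
  rewrite /w; lra.
have bound k n : fine (P (F U r part n k)) <= w ^+ k * th ^+ n.
  elim: k n => [|k IH] n.
    case: n => [|n]; first by rewrite !expr0 mulr1.
    by rewrite F0 measure0 /= mulr_ge0 // exprn_ge0 // ltW.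
  apply: le_trans (rec n k) _.
  apply: le_trans (_ : \sum_(t < n) c * (K * rho ^+ t) * (w ^+ k * th ^+ (n - t.+1)) <= _).
    apply: ler_sum => t _; apply: ler_wpM2l (IH _).
    by rewrite mulr_ge0 // mulr_ge0 // exprn_ge0.
  have -> : \sum_(t < n) c * (K * rho ^+ t) * (w ^+ k * th ^+ (n - t.+1)) =
      c * K * w ^+ k * \sum_(t < n) rho ^+ t * th ^+ (n - t.+1).
    by rewrite mulr_sumr; apply: eq_bigr => t _; ring.
  apply: le_trans (_ : c * K * w ^+ k * (th ^+ n / (th - rho)) <= _).
    apply: ler_wpM2l; first by apply: mulr_ge0; [exact: mulr_ge0 | apply: exprn_ge0; exact: ltW].
    exact: geo.
  have -> : c * K * w ^+ k * (th ^+ n / (th - rho)) = (w ^+ k * th ^+ n) * (c * K / (th - rho)).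
    by field; rewrite subr_eq0 gt_eqF.
  have -> : w ^+ k.+1 * th ^+ n = (w ^+ k * th ^+ n) * w by rewrite exprS; ring.
  by apply: ler_wpM2l => //; rewrite mulr_ge0 // exprn_ge0 // ltW.
have [m hm] : exists m : nat, tau ^+ m < w^-1.
  by apply: small_pow; [rewrite ger0_norm // | rewrite invr_gt0].
set q := tau ^+ m * w.
have q0 : 0 <= q by rewrite /q mulr_ge0 ?exprn_ge0 // ltW.
have q1 : q < 1 by rewrite /q -ltr_pdivlMr // div1r.
have N0 : (0 < m.+1)%N by [].
have [th' [th'0 th'e]] := root_ex (ltW th0) N0.
have [g [g0 ge]] := root_ex q0 N0.
have lt1 (b a : R) : 0 <= b -> b ^+ m.+1 = a -> a < 1 -> b < 1.
  move=> b0 e a1; rewrite ltNge; apply/negP => b1.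
  by have := exprn_ege1 m.+1 b1; rewrite e; lra.
have th'1 := lt1 _ _ th'0 th'e th1.
have g1 := lt1 _ _ g0 ge q1.
have th'p : 0 < th'.
  rewrite lt_def th'0 andbT; apply/negP => /eqP h.
  by move: th'e; rewrite h expr0n /= => h'; lra.
exists ((1 - g)^-1), th'; split; first by rewrite invr_gt0 subr_gt0.
split; first by rewrite th'p th'1.
move=> n; rewrite (integral_eq HY) // sumE lee_fin.
apply: le_trans (_ : \sum_(k < n.+1) g ^+ k * th' ^+ n <= _); last first.
  rewrite -mulr_suml; apply: ler_wpM2r; first exact: exprn_ge0.
  exact: geo2.
apply: ler_sum => k _.
rewrite -(@ler_pXn2r _ m.+1) // ?nnegrE; last first.
- by rewrite mulr_ge0 // exprn_ge0.
- by rewrite mulr_ge0 // exprn_ge0.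
apply: le_trans (term_bound k tau0 (ltW tau1) (f0 n k) (f1 n k) (bound k n) N0) _.
rewrite [X in _ <= X]exprMn [(g ^+ k) ^+ _]exprAC [(th' ^+ n) ^+ _]exprAC ge th'e.
rewrite /q [X in _ <= X * _]exprMn /=.
by rewrite mulrA.
Qed.
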